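(* Let $S\subseteq X$, $\psi:S\to Z$ be $C$-convex, $x_0\in S$ and $f=\psi^C$. Then the following three conditions on $x_0$ are equivalent: (i) $f(x_0)=Z$, or for all $x\in\operatorname{dom}f$ with $f(x)\ne f(x_0)$: $0\notin f'(x_0,x-x_0)$; (ii) $f(x_0)=Z$, or for all $x\in\operatorname{dom} f$ with $f(x)\ne f(x_0)$ there is $z^*\in C^-\setminus\{0\}$ with $0<\varphi'_{f,z^*}(x_0,x-x_0)$; (iii) for all $x\in\operatorname{dom}f$ with $f(x_0)\ne f(x)$ there is $z^*\in C^-\setminus\{0\}$ with $-\infty=\varphi_{f,z^*}(x_0)<\varphi_{f,z^*}(x)$ or $0<\varphi'_{f,z^*}(x_0,x-x_0)$. In particular, if for every $x\in S$ with $\psi(x)\ne\psi(x_0)$ there exists $z\in Z$ with $z\in\psi'(x_0,x-x_0)\setminus(-C)$, then $\psi(x_0)\in\operatorname{Eff}\psi[S]$.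
   Context: $X$ real linear space, $Z$ real locally convex Hausdorff space with dual $Z^*$, $C\subseteq Z$ closed convex cone, $0\in C$, $C^-=\{z^*:z^*(c)\le0\ \forall c\in C\}$, $C^-\setminus\{0\}\ne\emptyset$. $\psi:S\to Z$ is $C$-convex if $S$ is convex and $(1-t)\psi(x_1)+t\psi(x_2)\in\psi(x_1+t(x_2-x_1))+C$. $f=\psi^C$: $f(x)=\psi(x)+C$ for $x\in S$, $\emptyset$ otherwise; $\operatorname{dom}f=S$. $A\ominus B=\{z:B+\{z\}\subseteq A\}$; $f'(x,u)=\bigcap_{t_0>0}\operatorname{cl}\operatorname{co}\bigcup_{0<t<t_0}\frac1t(f(x+tu)\ominus f(x))$. $\varphi_{f,z^*}(x)=-z^*(\psi(x))$ for $x\in S$, $+\infty$ otherwise; on $\overline{\mathbb R}$: inf-addition $\dot+$ ($(-\infty)\dot+(+\infty)=+\infty$), $r\ominus s=\inf\{t\in\mathbb R:r\le s\dot+t\}$; $\varphi'_{f,z^*}(x,u)=\inf_{t>0}\frac1t(\varphi_{f,z^*}(x+tu)\ominus\varphi_{f,z^*}(x))$. $\psi(x_0)\in\operatorname{Eff}\psi[S]$: for all $y\in\psi[S]$, $\psi(x_0)\in y+C$ implies $\psi(x_0)\in y+(C\cap-C)$. Dini derivative $\psi'(x_0,v)$: the set of limits in $\tilde Z=Z\cup Z_\infty$ of $\frac1{t_i}(\psi(x_0+t_iv)-\psi(x_0))$ along sequences $t_i\downarrow0$, where $Z_\infty$ consists of infinite elements $z_\infty$ in direction $z$ ($z_\infty=y_\infty$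 iff $y=\lambda z$, $\lambda>0$; $0_\infty=0$), $\tilde Z$ topologized by neighborhood bases $z+U$ for $z\in Z$ and $(\{tz\}+\operatorname{cone}(U+\{z\}))\cup\{a_\infty: a\in (U+\{z\})\setminus\{0\}\}$ ($t>0$) for $z_\infty$, $z\ne0$, with $U$ closed convex balanced $0$-neighborhoods. *)

(* Defs.v *)
From HB Require Import structures.
From mathcomp Require Import all_boot all_order all_algebra.
From mathcomp Require Import all_classical all_reals all_analysis.
Set Implicit Arguments.
Unset Strict Implicit.
Unset Printing Implicit Defensive.
Import Order.TTheory GRing.Theory Num.Theory.
Import numFieldTopology.Exports numFieldNormedType.Exports.
Local Open Scope classical_set_scope.
Local Open Scope ring_scope.

Definition is_dual (R : realType) (Z : tvsType R) (zs : Z -> R) : Prop :=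
  (forall (a : R) (x y : Z), zs (a *: x + y) = a * zs x + zs y) /\
  continuous zs.

Definition is_cone (R : realType) (Z : tvsType R) (C : set Z) : Prop :=
  forall (c : Z) (t : R), C c -> 0 < t -> C (t *: c).

Definition neg_polar (R : realType) (Z : tvsType R) (C : set Z) : set (Z -> R) :=
  [set zs | is_dual zs /\ forall c, C c -> zs c <= 0].

(** psi : S -> Z is C-convex (psi is given as a total map X -> Z; only its
    values on S matter). *)
Definition C_convex (R : realType) (X : lmodType R) (Z : tvsType R)
    (C : set Z) (S : set X) (psi : X -> Z) : Prop :=
  convex_set (S : set (convex_lmodType X)) /\
  forall (x1 x2 : X) (t : R), S x1 -> S x2 -> 0 <= t <= 1 ->
    exists2 c, C c &
      (1 - t) *: psi x1 + t *: psi x2 = psi (x1 + t *: (x2 - x1)) + c.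

Definition psiC (R : realType) (X : lmodType R) (Z : tvsType R)
    (C : set Z) (S : set X) (psi : X -> Z) : X -> set Z :=
  fun x => [set z | S x /\ exists2 c, C c & z = psi x + c].

Definition mdiff (R : realType) (Z : tvsType R) (A B : set Z) : set Z :=
  [set z | forall b, B b -> A (b + z)].

Definition scale_set (R : realType) (Z : tvsType R) (k : R) (A : set Z) : set Z :=
  [set k *: a | a in A].

Definition conv_hull (R : realType) (Z : tvsType R) (A : set Z) : set Z :=
  [set z | forall B : set Z, convex_set (B : set (convex_lmodType Z)) ->
     A `<=` B -> B z].

Definition setder (R : realType) (X : lmodType R) (Z : tvsType R)
    (f : X -> set Z) (x u : X) : set Z :=
  [set z | forall t0 : R, 0 < t0 ->
     closure (conv_hull (\bigcup_(t in [set t : R | 0 < t < t0])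
        scale_set t^-1 (mdiff (f (x + t *: u)) (f x)))) z].

Definition phi_f (R : realType) (X : lmodType R) (Z : tvsType R)
    (S : set X) (psi : X -> Z) (zs : Z -> R) (x : X) : \bar R :=
  if asbool (S x) then (- zs (psi x))%:E else +oo%E.

(** r ⊖ s = inf {t in R : r <= s ∔ t}, with ∔ the inf-addition
    ((-oo) ∔ (+oo) = +oo), which is the library's [dual_adde]. *)
Definition ediff (R : realType) (r s : \bar R) : \bar R :=
  ereal_inf [set t%:E | t in [set t : R | (r <= dual_adde s t%:E)%E]].

Definition phider (R : realType) (X : lmodType R)
    (phi : X -> \bar R) (x u : X) : \bar R :=
  ereal_inf [set ((t^-1)%:E * ediff (phi (x + t *: u)%R) (phi x))%E
            | t in [set t : R | 0 < t]].

Definition efficient (R : realType) (X : lmodType R) (Z : tvsType R)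
    (C : set Z) (S : set X) (psi : X -> Z) (x0 : X) : Prop :=
  forall y, (psi @` S) y ->
    (exists2 c, C c & psi x0 = y + c) ->
    exists2 c, (C `&` [set - d | d in C]) c & psi x0 = y + c.

(** The finite part Z ∩ psi'(x0,v) of the Dini derivative: the z in Z which
    are limits of (1/t_i)(psi(x0+t_i v) - psi(x0)) along some t_i ↓ 0. *)
Definition dini_fin (R : realType) (X : lmodType R) (Z : tvsType R)
    (psi : X -> Z) (x0 v : X) : set Z :=
  [set z | exists t : nat -> R,
     [/\ forall n, 0 < t n, forall n, t n.+1 <= t n, t @ \oo --> 0 &
         (fun n => (t n)^-1 *: (psi (x0 + t n *: v) - psi x0)) @ \oo --> z]].

(* Main.v *)
Require Import Defs.
From HB Require Import structures.
From mathcomp Require Import all_boot all_order all_algebra.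
From mathcomp Require Import all_classical all_reals all_analysis.
From mathcomp Require Import ring lra.
Import Order.TTheory GRing.Theory Num.Theory.
Import numFieldTopology.Exports numFieldNormedType.Exports.
Local Open Scope classical_set_scope.
Local Open Scope ring_scope.
Set Implicit Arguments.
Unset Strict Implicit.

Section HahnBanach.
Variables (R : realType) (V : lmodType R) (p : V -> R) (v : V).
Hypothesis padd : forall x y, p (x + y) <= p x + p y.
Hypothesis phom : forall t x, 0 < t -> p (t *: x) = t * p x.

Let p0 : p 0 = 0.
Proof.
have := @phom 2 0 (ltr0Sn R 1); rewrite scaler0 => h.
have : p 0 + p 0 = p 0 + 0 by rewrite addr0 {3}h mulr2n mulrDl mul1r.
by move/addrI.
Qed.

Let lin (G : set (V * R)) := forall a z1 r1 z2 r2,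
  G (z1, r1) -> G (z2, r2) -> G (a *: z1 + z2, a * r1 + r2).
Let dom (G : set (V * R)) := forall z r, G (z, r) -> r <= p z.
Let anc (G : set (V * R)) := (exists zr, G zr) -> G (v, p v).
Let P (G : set (V * R)) := [/\ lin G, dom G & anc G].

Let linE G : lin G -> forall a z1 r1 z2 r2 z r,
  G (z1, r1) -> G (z2, r2) -> z = a *: z1 + z2 -> r = a * r1 + r2 -> G (z, r).
Proof. by move=> lG a z1 r1 z2 r2 z r G1 G2 -> ->; exact: lG. Qed.

Let Pbig : forall F : set (set (V * R)), F `<=` P -> total_on F subset ->
  P (\bigcup_(X in F) X).
Proof.
move=> F FP tF; split.
- move=> a z1 r1 z2 r2 [G1 FG1 G1z] [G2 FG2 G2z].
  have [G12|G21] := tF _ _ FG1 FG2.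
    by exists G2 => //; have [l _ _] := FP _ FG2; apply: l => //; exact: G12.
  by exists G1 => //; have [l _ _] := FP _ FG1; apply: l => //; exact: G21.
- by move=> z r [G FG Gz]; have [_ d _] := FP _ FG; exact: d.
- move=> [zr [G FG Gz]]; exists G => //; have [_ _ a] := FP _ FG.
  by apply: a; exists zr.
Qed.

Lemma hahn_banach : exists L : V -> R,
  [/\ forall a x y, L (a *: x + y) = a * L x + L y,
      forall x, L x <= p x & L v = p v].
Proof.
have [A [[lA dA aA] Amax]] := Zorn_bigcup Pbig.
pose G0 := [set zr : V * R | exists s, zr = (s *: v, s * p v)].
have PG0 : P G0.
  split.
  - move=> a z1 r1 z2 r2 [s1 [-> ->]] [s2 [-> ->]].
    by exists (a * s1 + s2); rewrite scalerDl scalerA mulrDl mulrA.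
  - move=> z r [s [-> ->]].
    have [s0|s0] := leP 0 s.
      move: s0; rewrite le_eqVlt => /orP[/eqP<-|s0].
        by rewrite mul0r scale0r p0.
      by rewrite phom.
    have := padd (s *: v) ((- s) *: v).
    rewrite -scalerDl subrr scale0r p0 (@phom (- s)) ?oppr_gt0 // mulNr => h.
    by rewrite -subr_ge0.
  - by move=> _; exists 1; rewrite scale1r mul1r.
have Av : A (v, p v).
  apply: contrapT => nAv.
  have A0 : A `<=` set0 by move=> zr Azr; apply: nAv; apply: aA; exists zr.
  apply: (Amax G0) => //; split; first by move=> zr /A0.
  by move=> /(_ (v, p v)) h; apply/nAv/h; exists 1; rewrite scale1r mul1r.
have A00 : A (0, 0).
  by apply: (linE (a:=-1) lA Av Av); rewrite ?scaleN1r ?mulN1r addNr.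
have Afun : forall z r1 r2, A (z, r1) -> A (z, r2) -> r1 = r2.
  move=> z r1 r2 A1 A2.
  have h1 : A (0, r1 - r2).
    by apply: (linE (a:=-1) lA A2 A1); rewrite ?scaleN1r ?mulN1r addrC ?subrr.
  have h2 : A (0, r2 - r1).
    by apply: (linE (a:=-1) lA A1 A2); rewrite ?scaleN1r ?mulN1r addrC ?subrr.
  have := dA _ _ h1; have := dA _ _ h2; rewrite p0 !subr_le0 => ??.
  by apply/eqP; rewrite eq_le; apply/andP.
have Atot : forall w, exists r, A (w, r).
  move=> w; apply: contrapT => nw.
  pose E := [set x | exists a r, A (a, r) /\ x = r - p (a - w)].
  have E0 : E !=set0 by exists (0 - p (0 - w)); exists 0, 0.
  have Eub : forall b q, A (b, q) -> ubound E (p (b + w) - q).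
    move=> b q Abq _ [a [r [Aar ->]]].
    rewrite lerBrDr addrAC lerBlDr.
    have := dA _ _ (linE (a:=1) lA Aar Abq erefl erefl).
    rewrite scale1r mul1r => h; apply: (le_trans h).
    by apply: le_trans (padd _ _); rewrite addrCA addrK.
  have hsE : has_sup E by split => //; exists (p (0 + w) - 0); exact: Eub A00.
  pose c := sup E.
  have cge : forall a r, A (a, r) -> r - p (a - w) <= c.
    by move=> a r Aar; apply: sup_upper_bound => //; exists a, r.
  have cle : forall b q, A (b, q) -> c <= p (b + w) - q.
    by move=> b q Abq; apply: ge_sup => //; exact: Eub.
  pose B := [set zr : V * R | exists a r s, A (a, r) /\ zr = (a + s *: w, r + s * c)].
  apply: (Amax B); last split.
  - split; first by move=> [a r] Aar; exists a, r, 0; rewrite scale0r mul0r !addr0.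
    move=> /(_ (w, c)) h; apply: nw; exists c; apply: h.
    by exists 0, 0, 1; rewrite scale1r mul1r !add0r.
  - move=> a z1 r1 z2 r2 [a1 [q1 [s1 [A1 [-> ->]]]]] [a2 [q2 [s2 [A2 [-> ->]]]]].
    exists (a *: a1 + a2), (a * q1 + q2), (a * s1 + s2); split; first exact: lA.
    congr (_, _).
      by rewrite scalerDr scalerDl scalerA; rewrite -!addrA; congr (_ + _);
        rewrite addrCA.
    by rewrite mulrDr mulrDl mulrA -!addrA; congr (_ + _); rewrite addrCA.
  - move=> z r [a [q [s [Aaq [-> ->]]]]].
    have [s0|s0] := ltP 0 s.
      have Aa' : A (s^-1 *: a, s^-1 * q).
        by apply: (linE (a:=s^-1) lA Aaq A00); rewrite addr0.
      have := cle _ _ Aa'.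
      rewrite lerBrDr -(ler_pM2l s0) mulrDr mulrA mulfV ?gt_eqF // mul1r.
      rewrite -phom // scalerDr scalerA mulfV ?gt_eqF // scale1r.
      by rewrite addrC.
    move: s0; rewrite le_eqVlt => /orP[/eqP->|s0].
      by rewrite scale0r mul0r !addr0; exact: dA.
    pose t := - s; have t0 : 0 < t by rewrite oppr_gt0.
    have Aa' : A (t^-1 *: a, t^-1 * q).
      by apply: (linE (a:=t^-1) lA Aaq A00); rewrite addr0.
    have := cge _ _ Aa'.
    rewrite lerBlDr -(ler_pM2l t0) mulrDr mulrA mulfV ?gt_eqF // mul1r.
    rewrite -phom // scalerBr scalerA mulfV ?gt_eqF // scale1r.
    rewrite /t scaleNr opprK mulNr => h.
    by rewrite -lerBrDr (addrC (p _)).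
  - by move=> _; exists v, (p v), 0; rewrite scale0r mul0r !addr0.
have [L HL] := choice Atot.
exists L; split.
- move=> a x y; apply: (Afun (a *: x + y)) => //; exact: lA.
- by move=> x; exact: dA.
- by apply: Afun (HL v) Av.
Qed.

End HahnBanach.

Lemma convexP (R : realType) (M : lmodType R) (A : set M) :
  convex_set (A : set (convex_lmodType M)) ->
  forall x y t, A x -> A y -> 0 <= t -> t <= 1 -> A (t *: x + (1 - t) *: y).
Proof.
move=> cA x y t Ax Ay t0 t1.
have := cA x y (Itv01 t0 t1) (mem_set Ax) (mem_set Ay).
by rewrite inE.
Qed.

Lemma convexI (R : realType) (M : lmodType R) (A : set M) :
  (forall x y t, A x -> A y -> 0 <= t -> t <= 1 -> A (t *: x + (1 - t) *: y)) ->
  convex_set (A : set (convex_lmodType M)).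
Proof.
move=> H x y l /set_mem Ax /set_mem Ay; apply/mem_set.
exact: (H x y l%:num Ax Ay).
Qed.

Section Gauge.
Variables (R : realType) (V : lmodType R) (E : set V).
Hypothesis cE : convex_set (E : set (convex_lmodType V)).
Hypothesis E0 : E 0.
Hypothesis absE : forall z, exists2 t, 0 < t & E (t *: z).

Let T z := [set t : R | 0 < t /\ E (t^-1 *: z)].
Definition gauge z := inf (T z).

Let T0 z : T z !=set0.
Proof.
have [t t0 Etz] := absE z; exists t^-1; split; first by rewrite invr_gt0.
by rewrite invrK.
Qed.

Let Tlb z : has_lbound (T z).
Proof. by exists 0 => t [/ltW]. Qed.

Let Tle z t : T z t -> gauge z <= t.
Proof. by move=> Tt; exact: (ge_inf (Tlb z)). Qed.

Lemma gauge_ge z x : (forall t, T z t -> x <= t) -> x <= gauge z.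
Proof. by move=> h; apply: lb_le_inf => //; exact: T0. Qed.

Lemma gauge_scale t x : 0 < t -> gauge (t *: x) = t * gauge x.
Proof.
have G1 : forall t x, 0 < t -> gauge (t *: x) <= t * gauge x.
  move=> {}t {}x t0; rewrite -ler_pdivrMl //; apply: gauge_ge => s [s0 Es].
  rewrite ler_pdivrMl //; apply: Tle; split; first exact: mulr_gt0.
  by rewrite scalerA invfM mulrAC mulVf ?gt_eqF // mul1r.
move=> t0; apply/eqP; rewrite eq_le G1 //=.
have := G1 t^-1 (t *: x); rewrite invr_gt0 t0 scalerA mulVf ?gt_eqF // scale1r.
by move=> /(_ isT); rewrite ler_pdivlMl.
Qed.

Lemma gauge_add x y : gauge (x + y) <= gauge x + gauge y.
Proof.
have key : forall a b, T x a -> T y b -> gauge (x + y) <= a + b.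
  move=> a b [a0 Ea] [b0 Eb]; apply: Tle; split; first exact: addr_gt0.
  have ab0 : 0 < a + b by exact: addr_gt0.
  have h1 : 0 <= a / (a + b) by rewrite divr_ge0 // ltW.
  have h2 : a / (a + b) <= 1 by rewrite ler_pdivrMr // mul1r lerDl ltW.
  have := convexP cE Ea Eb h1 h2.
  have -> : 1 - a / (a + b) = b / (a + b).
    by apply/(mulIf (lt0r_neq0 ab0)); rewrite mulrBl mul1r !(divfK (lt0r_neq0 ab0)) addrC addKr.
  have e1 : a / (a + b) * a^-1 = (a + b)^-1.
    by rewrite mulrAC mulfV ?gt_eqF // mul1r.
  have e2 : b / (a + b) * b^-1 = (a + b)^-1.
    by rewrite mulrAC mulfV ?gt_eqF // mul1r.
  by rewrite !scalerA e1 e2 -scalerDr.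
rewrite -lerBlDr; apply: gauge_ge => a Ta; rewrite lerBlDr (addrC a) -lerBlDr.
by apply: gauge_ge => b Tb; rewrite lerBlDr (addrC b); exact: key.
Qed.

Lemma gauge_le1 z : E z -> gauge z <= 1.
Proof. by move=> Ez; apply: Tle; split => //; rewrite invr1 scale1r. Qed.

Lemma gauge_lt1 z : gauge z < 1 -> E z.
Proof.
move=> /(inf_lt (T0 z)) [s [s0 Es] s1].
have := convexP cE Es E0 (ltW s0) (ltW s1).
by rewrite scaler0 addr0 scalerA mulfV ?gt_eqF // scale1r.
Qed.

End Gauge.

Section LinFacts.
Variables (R : realType) (V : lmodType R) (L : V -> R).
Hypothesis HL : forall a x y, L (a *: x + y) = a * L x + L y.
Lemma lin0 : L 0 = 0.
Proof.
have := HL 1 0 0; rewrite scale1r addr0 mul1r => h.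
by apply/(addrI (L 0)); rewrite addr0 -h.
Qed.
Lemma linD x y : L (x + y) = L x + L y.
Proof. by have := HL 1 x y; rewrite scale1r mul1r. Qed.
Lemma linZ a x : L (a *: x) = a * L x.
Proof. by have := HL a x 0; rewrite !addr0 lin0 addr0. Qed.
Lemma linN x : L (- x) = - L x.
Proof. by rewrite -scaleN1r linZ mulN1r. Qed.
End LinFacts.

Lemma absorb (R : realType) (Z : tvsType R) (U : set Z) :
  nbhs 0 U -> forall z, exists2 t, 0 < t & U (t *: z).
Proof.
move=> U0 z.
have hc : (fun k : R^o => k *: z) @ 0 --> (0 : Z).
  rewrite -(scale0r z).
  apply: (cvg_comp2 cvg_id (cvg_cst _) (scale_continuous (0 : R^o, z))).
have := hc _ U0; rewrite /= => /nbhs_ballP [e e0 /= he].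
exists (e / 2); first by rewrite divr_gt0.
apply: he; rewrite /ball /= sub0r normrN ger0_norm ?divr_ge0 ?ltW //.
by rewrite ltr_pdivrMr // ltr_pMr // ltr1n.
Qed.

Lemma convex_basis (R : realType) (Z : tvsType R) (N : set Z) :
  nbhs 0 N -> exists W : set Z,
    [/\ convex_set (W : set (convex_lmodType Z)), nbhs 0 W & W `<=` N].
Proof.
move=> N0; have [B cB [Bo Bb]] := @locally_convex R Z.
have := Bb 0 _ N0; rewrite /= => -[W [BW W0] WN].
exists W; split => //; first exact: cB (mem_set BW).
by apply: open_nbhs_nbhs; split => //; exact: Bo.
Qed.

Lemma aff (R : realType) (Z : lmodType R) (t : R) (a b c d : Z) :
  t *: (a + b) + (1 - t) *: (c + d) =
  (t *: a + (1 - t) *: c) + (t *: b + (1 - t) *: d).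
Proof. by rewrite !scalerDr addrACA. Qed.

Lemma affc (R : realType) (Z : lmodType R) (t : R) (a : Z) :
  t *: a + (1 - t) *: a = a.
Proof. by rewrite -scalerDl subrKC scale1r. Qed.

Lemma separation (R : realType) (Z : tvsType R) (K : set Z) (k0 : Z) (N : set Z) :
  convex_set (K : set (convex_lmodType Z)) -> K k0 -> nbhs 0 N ->
  (forall k, K k -> ~ N k) ->
  exists L : Z -> R, is_dual L /\ exists2 e, 0 < e & forall k, K k -> L k <= - e.
Proof.
move=> cK Kk0 N0 KN.
have [W [cW W0 WN]] := convex_basis N0.
have W00 : W 0 := nbhs_singleton W0.
have two0 : (2 : R)^-1 != 0 by rewrite invr_eq0 pnatr_eq0.
have ntwo0 : - (2 : R)^-1 != 0 by rewrite oppr_eq0.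
have two0' : (2 : R) != 0 by rewrite pnatr_eq0.
pose U := [set u : Z | W (2 *: u)] `&` [set u : Z | W (- (2 *: u))].
have U0 : nbhs 0 U.
  apply: filterI.
  - have h := nbhs0Z two0 W0; apply: filterS h => _ [w Ww <-] /=.
    by rewrite scalerA mulfV // scale1r.
  - have h := nbhs0Z ntwo0 W0; apply: filterS h => _ [w Ww <-] /=.
    by rewrite scalerA mulrN mulfV // scaleN1r opprK.
have cU : convex_set (U : set (convex_lmodType Z)).
  apply: convexI => u1 u2 t [/= h1 h1'] [/= h2 h2'] t0 t1; split => /=.
    rewrite scalerDr !scalerA !(mulrC 2) -!scalerA.
    by have := convexP cW h1 h2 t0 t1.
  rewrite scalerDr opprD !scalerA !(mulrC 2) -!scalerA -!scalerN.
  by have := convexP cW h1' h2' t0 t1; rewrite !scalerN.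
have UN : forall u, U u -> U (- u).
  by move=> u [h1 h2]; split; rewrite /= scalerN ?opprK.
have UW : forall u, U u -> W u.
  move=> u [h1 _].
  have h0 : (0 : R) <= 2^-1 by rewrite invr_ge0 ler0n.
  have h1' : (2 : R)^-1 <= 1 by rewrite invf_le1 ?ler1n ?ltr0n.
  have := convexP cW h1 W00 h0 h1'.
  by rewrite scaler0 addr0 scalerA mulVf // scale1r.
pose E := [set z : Z | exists k u, [/\ K k, U u & z = (k + u) + - k0]].
have cE : convex_set (E : set (convex_lmodType Z)).
  apply: convexI => z1 z2 t [k1 [u1 [K1 U1 ->]]] [k2 [u2 [K2 U2 ->]]] t0 t1.
  exists (t *: k1 + (1 - t) *: k2), (t *: u1 + (1 - t) *: u2); split.
  - by have := convexP cK K1 K2 t0 t1.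
  - by have := convexP cU U1 U2 t0 t1.
  - by rewrite aff aff affc.
have E0 : E 0.
  exists k0, 0; split => //; last by rewrite addr0 subrr.
  by split; rewrite /= scaler0 ?oppr0.
have absE : forall z, exists2 t, 0 < t & E (t *: z).
  move=> z; have [t t0 Ut] := absorb U0 z; exists t => //.
  by exists k0, (t *: z); split => //; rewrite addrAC subrr add0r.
have nE : ~ E (- k0).
  move=> [k [u [Kk Uu e]]].
  have : k + u = 0 by apply/(addIr (- k0)); rewrite add0r -e.
  move/eqP; rewrite addr_eq0 => /eqP ku.
  by apply: (KN k Kk); apply: WN; rewrite ku; apply: UW; exact: UN.
have [L [HL Lp Lv]] := @hahn_banach R Z (gauge E) (- k0)
  (gauge_add cE absE) (gauge_scale absE).
have L1 : 1 <= L (- k0).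
  by rewrite Lv leNgt; apply/negP => /(gauge_lt1 cE E0 absE).
have LU : forall u, U u -> `|L u| <= 1.
  move=> u Uu; rewrite ler_norml; apply/andP; split.
    rewrite lerNl -(linN HL).
    apply: le_trans (Lp _) _; apply: gauge_le1.
    by exists k0, (- u); split => //; [exact: UN|rewrite addrAC subrr add0r].
  apply: le_trans (Lp _) _; apply: gauge_le1.
  by exists k0, u; split => //; rewrite addrAC subrr add0r.
have [eps eps0 Ueps] := absorb U0 (- k0).
exists L; split.
  split; first exact: HL.
  move=> x; apply/cvgrPdist_lt => e e0.
  have e20 : e / 2 != 0 by rewrite mulf_neq0 // gt_eqF.
  have h := nbhsT x (nbhs0Z e20 U0).
  apply: filterS h => _ /= [_ [u Uu <-] <-].
  rewrite (linD HL) (linZ HL) opprD addrA subrr add0r normrN normrM.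
  rewrite (@ger0_norm _ (e / 2)) ?divr_ge0 ?ltW //.
  apply: (@le_lt_trans _ _ (e / 2)).
    rewrite -{2}(mulr1 (e / 2)); apply: ler_wpM2l; last exact: LU.
    by rewrite divr_ge0 // ltW.
  by rewrite ltr_pdivrMr // ltr_pMr // ltr1n.
exists eps => // k Kk.
have : E ((k + eps *: - k0) + - k0) by exists k, (eps *: - k0).
move/gauge_le1 => h; have := le_trans (Lp _) h.
rewrite !(linD HL) (linZ HL).
have : eps <= eps * L (- k0) by rewrite ler_pMr.
move: (eps * L (- k0)) => b; move: L1; move: (L k) (L (- k0)) => a c.
lra.
Qed.

Lemma ediff_fin (R : realType) (r s : R) : ediff r%:E s%:E = (r - s)%:E.
Proof.
rewrite /ediff; apply/eqP; rewrite eq_le; apply/andP; split.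
  apply: ereal_inf_lbound; exists (r - s) => //=.
  by rewrite /dual_adde /= addrC subrK.
apply: le_ereal_inf_tmp => _ [t /= h <-]; move: h.
by rewrite /dual_adde /= !lee_fin lerBlDl.
Qed.

Lemma ediff_pinfty (R : realType) (s : R) : ediff +oo%E s%:E = +oo%E.
Proof.
rewrite /ediff; apply/eqP; rewrite eq_le leey /=.
apply: le_ereal_inf_tmp => _ [t /= h <-]; move: h.
by rewrite /dual_adde /= leye_eq.
Qed.

Lemma pos_ereal (R : realType) (m : \bar R) : (0 < m)%E ->
  exists2 eps : R, 0 < eps & (eps%:E <= m)%E.
Proof.
case: m => [r||] //=; first by rewrite lte_fin => r0; exists r.
by move=> _; exists 1; rewrite ?ltr01 ?leey.
Qed.

Section Main.
Variables (R : realType) (X : lmodType R) (Z : tvsType R) (C : set Z)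
  (S : set X) (psi : X -> Z) (x0 : X).
Hypotheses (clC : closed C) (cC : convex_set (C : set (convex_lmodType Z)))
  (coneC : is_cone C) (C0 : C 0) (Ccv : C_convex C S psi) (Sx0 : S x0).

Lemma CD c1 c2 : C c1 -> C c2 -> C (c1 + c2).
Proof.
move=> h1 h2.
have t0 : (0 : R) <= 2^-1 by rewrite invr_ge0 ler0n.
have t1 : (2 : R)^-1 <= 1 by rewrite invf_le1 ?ler1n ?ltr0n.
have := convexP cC h1 h2 t0 t1.
have -> : 1 - (2 : R)^-1 = 2^-1.
  by apply/(mulIf (lt0r_neq0 (ltr0Sn R 1))); rewrite mulrBl mul1r mulVf ?pnatr_eq0 // mulr2n -addrA subrr addr0.
rewrite -scalerDr => /(coneC (t := 2)) /(_ (ltr0Sn R 1)).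
by rewrite scalerA mulfV ?pnatr_eq0 // scale1r.
Qed.

Lemma Sxt x t : S x -> 0 <= t -> t <= 1 -> S (x0 + t *: (x - x0)).
Proof.
move=> Sx t0 t1; have := convexP Ccv.1 Sx Sx0 t0 t1.
by rewrite scalerBr scalerBl scale1r addrCA.
Qed.

Lemma dualC (zs : Z -> R) : neg_polar C zs -> forall c, C c -> zs c <= 0.
Proof. by case. Qed.

Lemma duallin (zs : Z -> R) : is_dual zs -> forall a x y, zs (a *: x + y) = a * zs x + zs y.
Proof. by case. Qed.

Lemma mono (zs : Z -> R) x s t : neg_polar C zs -> S x -> 0 < t -> t <= s ->
  S (x0 + s *: (x - x0)) ->
  t / s * (zs (psi (x0 + s *: (x - x0))) - zs (psi x0)) <=
  zs (psi (x0 + t *: (x - x0))) - zs (psi x0).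
Proof.
move=> [dz zC] Sx t0 ts Ss.
have s0 : 0 < s by exact: lt_le_trans ts.
have l0 : 0 <= t / s by rewrite divr_ge0 // ltW.
have l1 : t / s <= 1 by rewrite ler_pdivrMr // mul1r.
have l01 : 0 <= t / s <= 1 by rewrite l0 l1.
have [c Cc e] := Ccv.2 _ _ _ Sx0 Ss l01.
have ex : x0 + t / s *: (x0 + s *: (x - x0) - x0) = x0 + t *: (x - x0).
  by rewrite addrAC subrr add0r scalerA divfK ?gt_eqF.
rewrite ex in e.
have := congr1 zs e.
rewrite !(linD (duallin dz)) !(linZ (duallin dz)) => e'.
have := zC _ Cc; move: e'.
move: (zs (psi x0)) (zs (psi (x0 + s *: (x - x0)))) (zs (psi (x0 + t *: (x - x0)))) (zs c) => a b d g.
move=> e' g0.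
have -> : t / s * (b - a) = (1 - t / s) * a + t / s * b - a by ring.
lra.
Qed.


Lemma Dsub (zs : Z -> R) x t z : neg_polar C zs -> 0 < t ->
  scale_set t^-1 (mdiff (psiC C S psi (x0 + t *: (x - x0))) (psiC C S psi x0)) z ->
  S (x0 + t *: (x - x0)) /\ zs z <= t^-1 * (zs (psi (x0 + t *: (x - x0))) - zs (psi x0)).
Proof.
move=> [dz zC] t0 [w hw <-].
have [Sxt [c Cc e]] : psiC C S psi (x0 + t *: (x - x0)) (psi x0 + w).
  by apply: hw; split => //; exists 0 => //; rewrite addr0.
split => //.
have := congr1 zs e; rewrite !(linD (duallin dz)) (linZ (duallin dz)).
have := zC _ Cc.
move: (zs w) (zs c) (zs (psi x0)) (zs (psi (x0 + t *: (x - x0)))) => a b g d.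
move=> b0 e'; apply: ler_wpM2l; first by rewrite invr_ge0 ltW.
lra.
Qed.

Lemma Dsup x t c : S (x0 + t *: (x - x0)) -> C c ->
  scale_set t^-1 (mdiff (psiC C S psi (x0 + t *: (x - x0))) (psiC C S psi x0))
    (t^-1 *: (psi (x0 + t *: (x - x0)) - psi x0 + c)).
Proof.
move=> Sxt Cc; exists (psi (x0 + t *: (x - x0)) - psi x0 + c) => //.
move=> b [_ [c' Cc' ->]]; split => //; exists (c' + c); first exact: CD.
by rewrite addrACA subrKC.
Qed.

Lemma elemS (zs : Z -> R) x t : S (x0 + t *: (x - x0)) ->
  ((t^-1)%:E * ediff (phi_f S psi zs (x0 + t *: (x - x0))) (phi_f S psi zs x0))%E
  = (t^-1 * (zs (psi x0) - zs (psi (x0 + t *: (x - x0)))))%:E.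
Proof.
by move=> Sxt; rewrite /phi_f !asboolT // ediff_fin -EFinM opprK addrC.
Qed.

Lemma elemNS (zs : Z -> R) x t : 0 < t -> ~ S (x0 + t *: (x - x0)) ->
  ((t^-1)%:E * ediff (phi_f S psi zs (x0 + t *: (x - x0))) (phi_f S psi zs x0))%E
  = +oo%E.
Proof.
move=> t0 nS; rewrite /phi_f asboolF // asboolT // ediff_pinfty gt0_muley //.
by rewrite lte_fin invr_gt0.
Qed.

End Main.

Unset Implicit Arguments.
Set Strict Implicit.

Lemma conv_hull_convex (R : realType) (Z : tvsType R) (A : set Z) :
  convex_set (conv_hull A : set (convex_lmodType Z)).
Proof.
apply: convexI => x y t hx hy t0 t1 B cB AB.
by have := convexP cB (hx B cB AB) (hy B cB AB) t0 t1.
Qed.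

Lemma half_convex (R : realType) (Z : tvsType R) (zs : Z -> R) (e : R) :
  is_dual zs -> convex_set ([set z | zs z <= e] : set (convex_lmodType Z)).
Proof.
move=> dz; apply: convexI => x y t hx hy t0 t1 /=.
rewrite (linD (duallin dz)) !(linZ (duallin dz)).
have h1 : t * zs x <= t * e by rewrite ler_wpM2l.
have h2 : (1 - t) * zs y <= (1 - t) * e by rewrite ler_wpM2l // subr_ge0.
have := lerD h1 h2; rewrite -mulrDl subrKC mul1r; exact.
Qed.

Lemma half_closed (R : realType) (Z : tvsType R) (zs : Z -> R) (e : R) :
  is_dual zs -> closed [set z | zs z <= e].
Proof.
move=> dz; have := @preimage_closed Z R^o zs [set r | r <= e].
by apply; [move=> y _; exact: dz.2 | exact: closed_le].
Qed.

Theorem mainTheorem16 (R : realType) (X : lmodType R) (Z : tvsType R)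
    (C : set Z) (S : set X) (psi : X -> Z) (x0 : X) :
  hausdorff_space Z ->
  closed C -> convex_set (C : set (convex_lmodType Z)) -> is_cone C -> C 0 ->
  (exists2 zs, neg_polar C zs & zs <> (fun _ => 0)) ->
  C_convex C S psi -> S x0 ->
  let f := psiC C S psi in
  let cond_i :=
    f x0 = setT \/
    forall x, S x -> f x <> f x0 -> ~ setder f x0 (x - x0) 0 in
  let cond_ii :=
    f x0 = setT \/
    forall x, S x -> f x <> f x0 ->
      exists2 zs, neg_polar C zs /\ zs <> (fun _ => 0) &
        (0 < phider (phi_f S psi zs) x0 (x - x0))%E in
  let cond_iii :=
    forall x, S x -> f x0 <> f x ->
      exists2 zs, neg_polar C zs /\ zs <> (fun _ => 0) &
        ((-oo = phi_f S psi zs x0 /\ phi_f S psi zs x0 < phi_f S psi zs x)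
         \/ 0 < phider (phi_f S psi zs) x0 (x - x0))%E in
  (cond_i <-> cond_ii) /\ (cond_ii <-> cond_iii) /\
  ((forall x, S x -> psi x <> psi x0 ->
      exists z, dini_fin psi x0 (x - x0) z /\ ~ [set - c | c in C] z) ->
   efficient C S psi x0).
Proof.
move=> hZ clC cC coneC C0 [zs0 [dz0 zC0] nzs0] Ccv Sx0 f cond_i cond_ii cond_iii.
have fx0T : f x0 <> setT.
  move=> h; apply: nzs0; apply: funext => z.
  have Cz : forall z, C z.
    move=> w; have : f x0 (psi x0 + w) by rewrite h.
    by move=> [_ [c Cc /addrI ->]].
  have := zC0 _ (Cz z); have := zC0 _ (Cz (- z)).
  rewrite (linN (duallin dz0)) => h1 h2; lra.
split; [|split].
- rewrite /cond_i /cond_ii; split.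
  + case=> [//|hi]; right => x Sx fx.
    have nsd := hi x Sx fx.
    pose D t := scale_set t^-1 (mdiff (f (x0 + t *: (x - x0))) (f x0)).
    have [t0 t00 ncl] : exists2 t0 : R, 0 < t0 &
        ~ closure (conv_hull (\bigcup_(t in [set t : R | 0 < t < t0]) D t)) 0.
      apply: contrapT => h; apply: nsd => t0 t00; apply: contrapT => nc.
      by apply: h; exists t0.
    pose K := conv_hull (\bigcup_(t in [set t : R | 0 < t < t0]) D t).
    have [B B0 KB] : exists2 B, nbhs 0 B & forall k, K k -> ~ B k.
      apply: contrapT => h; apply: ncl => B B0; apply: contrapT => nKB.
      apply: h; exists B => // k Kk Bk; apply: nKB; by exists k.
    have KD : forall t c, 0 < t -> t < t0 -> S (x0 + t *: (x - x0)) -> C c ->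
        K (t^-1 *: (psi (x0 + t *: (x - x0)) - psi x0 + c)).
      move=> t c t0' tt0 St Cc A cA sub; apply: sub; exists t.
        by rewrite /= t0' tt0.
      exact: Dsup.
    pose t1 := Num.min t0 1 / 2.
    have t10 : 0 < t1 by rewrite divr_gt0 // lt_min t00 ltr01.
    have t1lt : t1 < Num.min t0 1.
      by rewrite /t1 ltr_pdivrMr // ltr_pMr ?ltr1n // lt_min t00 ltr01.
    have t1t0 : t1 < t0 by apply: lt_le_trans t1lt _; rewrite ge_min lexx.
    have t11 : t1 <= 1 by apply: ltW; apply: lt_le_trans t1lt _; rewrite ge_min lexx orbT.
    have St1 : S (x0 + t1 *: (x - x0)) := Sxt Ccv Sx0 Sx (ltW t10) t11.
    have Kk0 := KD t1 0 t10 t1t0 St1 C0.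
    have [L [dL [eps eps0 hL]]] := separation (@conv_hull_convex R Z _) Kk0 B0 KB.
    have LC : forall c, C c -> L c <= 0.
      move=> c Cc; rewrite leNgt; apply/negP => Lc0.
      pose w := psi (x0 + t1 *: (x - x0)) - psi x0.
      pose a := t1^-1 * L w.
      pose s := (`|a| + 1) / L c.
      have s0 : 0 < s by rewrite divr_gt0 // ltr_wpDl.
      have Cc' : C ((t1 * s) *: c) by apply: coneC => //; exact: mulr_gt0.
      have := hL _ (KD t1 _ t10 t1t0 St1 Cc').
      rewrite (linZ (duallin dL)) (linD (duallin dL)) (linZ (duallin dL)).
      rewrite mulrDr mulrA (mulrA t1^-1) mulVf ?gt_eqF // mul1r.
      rewrite /s divfK ?gt_eqF // -/a.
      have := ler_norm (- a); rewrite normrN.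
      move: `|a| => b; lra.
    exists L.
      split; first by split.
      move=> L0; have := hL _ Kk0; rewrite L0 /=; lra.
    apply: (@lt_le_trans _ _ eps%:E); first by rewrite lte_fin.
    apply: le_ereal_inf_tmp => _ [t /= t0' <-].
    have [St|nSt] := pselect (S (x0 + t *: (x - x0))); last first.
      by rewrite elemNS // leey.
    rewrite elemS // lee_fin.
    pose t' := Num.min (Num.min t t0) 1 / 2.
    have m0 : 0 < Num.min (Num.min t t0) 1 by rewrite !lt_min t0' t00 ltr01.
    have t'0 : 0 < t' by rewrite divr_gt0.
    have t'lt : t' < Num.min (Num.min t t0) 1.
      by rewrite /t' ltr_pdivrMr // ltr_pMr ?ltr1n.
    have t't : t' <= t.
      by apply/ltW/(lt_le_trans t'lt); rewrite !ge_min lexx.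
    have t't0 : t' < t0.
      by apply/(lt_le_trans t'lt); rewrite !ge_min lexx orbT.
    have t'1 : t' <= 1.
      by apply/ltW/(lt_le_trans t'lt); rewrite ge_min lexx orbT.
    have St' : S (x0 + t' *: (x - x0)) := Sxt Ccv Sx0 Sx (ltW t'0) t'1.
    have hm := mono Ccv Sx0 (conj dL LC) Sx t'0 t't St.
    have := hL _ (KD t' 0 t'0 t't0 St' C0).
    rewrite addr0 (linZ (duallin dL)) (linD (duallin dL)) (linN (duallin dL)).
    move: hm.
    move: (L (psi x0)) (L (psi (x0 + t *: (x - x0)))) (L (psi (x0 + t' *: (x - x0)))) => a b d hm h2.
    have h1 : t^-1 * (b - a) <= t'^-1 * (d - a).
      by rewrite -(ler_pM2l t'0) mulrA mulrA mulfV ?gt_eqF // mul1r.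
    have : t^-1 * (b - a) <= - eps by apply: le_trans h1 h2.
    have -> : t^-1 * (a - b) = - (t^-1 * (b - a)) by ring.
    move: (t^-1 * (b - a)) => g; lra.
  + case=> [//|hii]; right => x Sx fx.
    have [zs [pz nz] hpos] := hii x Sx fx.
    have dz := pz.1.
    have [eps eps0 heps] := pos_ereal hpos.
    have bound : forall t, 0 < t -> S (x0 + t *: (x - x0)) ->
        t^-1 * (zs (psi (x0 + t *: (x - x0))) - zs (psi x0)) <= - eps.
      move=> t t0 St.
      have := le_trans heps (ereal_inf_lbound (ex_intro2 _ _ t t0 erefl)).
      rewrite elemS // lee_fin.
      have -> : t^-1 * (zs (psi x0) - zs (psi (x0 + t *: (x - x0)))) =
        - (t^-1 * (zs (psi (x0 + t *: (x - x0))) - zs (psi x0))) by ring.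
      move: (t^-1 * _) => a; lra.
    move=> hs; have := hs 1 ltr01.
    pose H := [set z : Z | zs z <= - eps].
    have HU : \bigcup_(t in [set t : R | 0 < t < 1])
        scale_set t^-1 (mdiff (f (x0 + t *: (x - x0))) (f x0)) `<=` H.
      move=> z [t /andP [t0 _] hz].
      have [St hz'] := Dsub C0 Sx0 pz t0 hz.
      exact: le_trans hz' (bound t t0 St).
    have hull : conv_hull (\bigcup_(t in [set t : R | 0 < t < 1])
        scale_set t^-1 (mdiff (f (x0 + t *: (x - x0))) (f x0))) `<=` H.
      by move=> z hz; apply: hz => //; exact: half_convex.
    move/(closureS hull); rewrite -(proj1 (closure_id H) (@half_closed R Z zs (- eps) dz)).
    rewrite /H /= (lin0 (duallin dz)); lra.
- rewrite /cond_ii /cond_iii; split.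
  + case=> [//|hii] x Sx fx.
    have [zs pz hz] := hii x Sx (nesym fx); exists zs => //; by right.
  + move=> hiii; right => x Sx fx.
    have [zs pz [[h _]|hz]] := hiii x Sx (nesym fx); last by exists zs.
    by move: h; rewrite /phi_f asboolT.
- move=> H y [x Sx <-] [c Cc e].
  exists c => //; split => //.
  have [ex|nex] := pselect (psi x = psi x0).
    exists 0 => //; rewrite oppr0.
    by apply/(addrI (psi x)); rewrite addr0 -e ex.
  exfalso.
  have [z [[tn [tpos _ tcv qcv]] nz]] := H x Sx nex.
  apply: nz; exists (- z); last by rewrite opprK.
  have clNC : closed [set w : Z | C (- w)].
    by apply: preimage_closed => // w _; exact: opp_continuous.
  apply: (@closed_cvg _ Z _ _ _ _ clNC _ z qcv).
  have h1 := cvgr_lt _ tcv _ ltr01.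
  near=> n.
  have tn1 : tn n < 1 by near: n; exact: h1.
  rewrite /=.
  have tn0 := tpos n.
  have t01 : 0 <= tn n <= 1 by rewrite ltW //= ltW.
  have [c1 Cc1 e1] := Ccv.2 _ _ _ Sx0 Sx t01.
  have hpx : psi x = psi x0 - c by rewrite e addrK.
  rewrite hpx scalerBr scalerBl scale1r addrA subrK in e1.
  have e2 : psi x0 - psi (x0 + tn n *: (x - x0)) = tn n *: c + c1.
    have -> : psi (x0 + tn n *: (x - x0)) = psi x0 - tn n *: c - c1.
      by rewrite e1 addrK.
    by rewrite opprB addrCA subKr addrC.
  rewrite -scalerN opprB e2 scalerDr scalerA mulVf ?gt_eqF // scale1r.
  apply: CD => //; apply: coneC => //; by rewrite invr_gt0.
Unshelve. all: by end_near.
Qed.
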